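(* Let $G$ be a looped simple graph and $k_1,k_2$ positive integers. The following are equivalent: (1) $G$ is locally equivalent to some looped simple graph $H$ having two distinct nonadjacent vertices of degrees $k_1-1$ and $k_2-1$ with no common neighbor; (2) some transverse matroid of $G$ has two disjoint circuits of sizes $k_1$ and $k_2$ whose union contains no other circuit.
   Context: A looped simple graph is a finite graph in which each vertex carries at most one loop and no two distinct vertices are joined by more than one edge. ''Adjacent''/''neighbors'' refer only to distinct vertices joined by a non-loop edge; the degree of a vertex is its number of neighbors (loops not counted). $A(G)$ is the $V(G)\times V(G)$ matrix over $GF(2)$ with diagonal entry $1$ exactly at looped vertices and off-diagonal entry $1$ exactly for adjacent pairs. $IAS(G)=(I\mid A(G)\mid A(G)+I)$ over $GF(2)$, rows indexed by $V(G)$; the $v$-columns of the three blocks are labelled $\phi_G(v),\chi_G(v),\psi_G(v)$. $M[IAS(G)]$ is the binary column matroid of $IAS(G)$ on $W(G)=\{\phi_G(v),\chi_G(v),\psi_G(v):v\in V(G)\}$. A transversal contains exactly one element of each vertex triple $\{\phi_G(v),\chi_G(v),\psi_G(v)\}$; a transverse matroid of $G$ is the restriction of $M[IAS(G)]$ to a transversal. Local equivalence: $G_\ell^v$ complements the loop status of $v$; $G_s^v$ complements the adjacency status of every pair of distinct neighbors of $v$; $G_{ns}^v$ does this and also complements the loop status of every neighbor of $v$. $H$ is locally equivalent to $G$ if obtained from $G$ by a finite sequence of such operations. *)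

(* Defs.v *)
From HB Require Import structures.
From mathcomp Require Import all_boot all_order all_algebra.
Set Implicit Arguments. Unset Strict Implicit. Unset Printing Implicit Defensive.
Import GRing.Theory.
Local Open Scope ring_scope.

Record lsgraph (n : nat) := LSG { loops : {set 'I_n}; edges : {set {set 'I_n}} }.

Definition wf_lsgraph n (G : lsgraph n) : Prop :=
  forall e, e \in edges G -> #|e| = 2%N.

Definition adjacent n (G : lsgraph n) (x y : 'I_n) : bool :=
  (x != y) && ([set x; y] \in edges G).

Definition nbhd n (G : lsgraph n) (v : 'I_n) : {set 'I_n} :=
  [set w | adjacent G v w].

Definition degree n (G : lsgraph n) (v : 'I_n) : nat := #|nbhd G v|.

Definition setXor (T : finType) (A B : {set T}) : {set T} := (A :\: B) :|: (B :\: A).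

Definition nbr_pairs n (G : lsgraph n) (v : 'I_n) : {set {set 'I_n}} :=
  [set [set x; y] | x in nbhd G v, y in nbhd G v & x != y].

Definition loc_l n (G : lsgraph n) (v : 'I_n) : lsgraph n :=
  LSG (setXor (loops G) [set v]) (edges G).
Definition loc_s n (G : lsgraph n) (v : 'I_n) : lsgraph n :=
  LSG (loops G) (setXor (edges G) (nbr_pairs G v)).
Definition loc_ns n (G : lsgraph n) (v : 'I_n) : lsgraph n :=
  LSG (setXor (loops G) (nbhd G v)) (setXor (edges G) (nbr_pairs G v)).

Inductive loc_equiv n (G : lsgraph n) : lsgraph n -> Prop :=
| loc_refl : loc_equiv G G
| loc_step_l H v : loc_equiv G H -> loc_equiv G (loc_l H v)
| loc_step_s H v : loc_equiv G H -> loc_equiv G (loc_s H v)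
| loc_step_ns H v : loc_equiv G H -> loc_equiv G (loc_ns H v).

Definition adjmx n (G : lsgraph n) : 'M['F_2]_n :=
  \matrix_(i, j) (if i == j then (i \in loops G)%:R else (adjacent G i j)%:R).

Definition IAS n (G : lsgraph n) : 'M['F_2]_(n, n + n + n) :=
  row_mx (row_mx 1%:M (adjmx G)) (adjmx G + 1%:M).

Definition phiG n (v : 'I_n) : 'I_(n + n + n) := lshift n (lshift n v).
Definition chiG n (v : 'I_n) : 'I_(n + n + n) := lshift n (rshift n v).
Definition psiG n (v : 'I_n) : 'I_(n + n + n) := rshift (n + n) v.

Definition ias_transversal n (T : {set 'I_(n + n + n)}) : Prop :=
  forall v : 'I_n, #|T :&: [set phiG v; chiG v; psiG v]| = 1%N.

Definition dependent m k (M : 'M['F_2]_(m, k)) (C : {set 'I_k}) : Prop :=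
  exists x : 'cV['F_2]_k,
    [/\ x != 0, (forall j, j \notin C -> x j 0 = 0) & M *m x = 0].

Definition circuit_restr m k (M : 'M['F_2]_(m, k)) (T C : {set 'I_k}) : Prop :=
  [/\ C \subset T, dependent M C & forall D : {set 'I_k}, D \proper C -> ~ dependent M D].

(* Main.v *)
Require Import Defs.
From Stdlib Require Import Classical.
From mathcomp Require Import all_boot all_order all_algebra.
Set Implicit Arguments. Unset Strict Implicit. Unset Printing Implicit Defensive.
Import GRing.Theory.
Local Open Scope ring_scope.


Lemma F2P (x : 'F_2) : x = 0 \/ x = 1.
Proof. case: x => [[|[|m]] Hm]. left; exact/val_inj. right; exact/val_inj. by []. Qed.
Lemma F2dbl (x : 'F_2) : x + x = 0.
Proof. by case: (F2P x) => ->; apply/eqP. Qed.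

Section Idx.
Variable n : nat.
Definition enc (k : nat) (v : 'I_n) : 'I_(n + n + n) :=
  if k == 0%N then phiG v else if k == 1%N then chiG v else psiG v.
Definition vtx (j : 'I_(n + n + n)) : 'I_n :=
  match split j with inl j1 => match split j1 with inl v => v | inr v => v end | inr v => v end.
Definition kind (j : 'I_(n + n + n)) : nat :=
  match split j with inl j1 => match split j1 with inl v => 0 | inr v => 1 end | inr v => 2 end.

Lemma kind_lt3 j : (kind j < 3)%N.
Proof. rewrite /kind; case: (split j) => // j1; by case: (split j1). Qed.

Lemma encK j : enc (kind j) (vtx j) = j.
Proof.
rewrite /kind /vtx; have := splitK j; case: (split j) => [j1|v] <-; last by [].
have := splitK j1; case: (split j1) => [v|v] <- //.
Qed.

Lemma vtx_enc k v : vtx (enc k v) = v.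
Proof.
rewrite /vtx /enc /phiG /chiG /psiG.
case: ifP => _; first by rewrite (unsplitK (inl _)) (unsplitK (inl _)).
case: ifP => _; first by rewrite (unsplitK (inl _)) (unsplitK (inr _)).
by rewrite (unsplitK (inr _)).
Qed.

Lemma kind_enc k v : (k < 3)%N -> kind (enc k v) = k.
Proof.
rewrite /kind /enc /phiG /chiG /psiG.
case: k => [|[|[|k]]] // _ /=.
- by rewrite (unsplitK (inl _)) (unsplitK (inl _)).
- by rewrite (unsplitK (inl _)) (unsplitK (inr _)).
- by rewrite (unsplitK (inr _)).
Qed.

Lemma enc_inj k1 k2 v1 v2 : (k1 < 3)%N -> (k2 < 3)%N -> enc k1 v1 = enc k2 v2 -> k1 = k2 /\ v1 = v2.
Proof.
move=> h1 h2 e; split; first by rewrite -(kind_enc v1 h1) -(kind_enc v2 h2) e.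
by rewrite -(vtx_enc k1 v1) -(vtx_enc k2 v2) e.
Qed.

Lemma enc_eq j k v : (k < 3)%N -> (j == enc k v) = (kind j == k) && (vtx j == v).
Proof.
move=> hk; apply/eqP/andP => [->|[/eqP <- /eqP <-]]; last by rewrite encK.
by rewrite kind_enc // vtx_enc.
Qed.

Lemma triple_vtx v j : (j \in [set phiG v; chiG v; psiG v]) = (vtx j == v).
Proof.
have ep : phiG v = enc 0 v by [].
have ec : chiG v = enc 1 v by [].
have es : psiG v = enc 2 v by [].
rewrite !inE ep ec es !enc_eq //.
have := kind_lt3 j; case: (kind j) => [|[|[|]]] //=; by rewrite ?orbF.
Qed.

Definition xf (x : 'cV['F_2]_(n + n + n)) (k : nat) (v : 'I_n) := x (enc k v) 0.

Definition kerF (A : 'M['F_2]_n) (f : nat -> 'I_n -> 'F_2) : Prop :=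
  forall i, f 0%N i + f 2%N i + \sum_k A i k * (f 1%N k + f 2%N k) = 0.

Definition IASm (A : 'M['F_2]_n) : 'M['F_2]_(n, n + n + n) :=
  row_mx (row_mx 1%:M A) (A + 1%:M).

Lemma IAS_kerF A (x : 'cV['F_2]_(n + n + n)) : IASm A *m x = 0 <-> kerF A (xf x).
Proof.
rewrite -[x]vsubmxK -[usubmx x]vsubmxK /IASm !mul_row_col mul1mx mulmxDl mul1mx.
move: (usubmx (usubmx x)) (dsubmx (usubmx x)) (dsubmx x) => p c s.
have -> : p + A *m c + (A *m s + s) = (p + s) + A *m (c + s).
  by rewrite mulmxDr [A *m s + s]addrC addrACA.
have ep i : xf (col_mx (col_mx p c) s) 0 i = p i 0.
  by rewrite /xf /enc /= /phiG !col_mxEu.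
have ec i : xf (col_mx (col_mx p c) s) 1 i = c i 0.
  by rewrite /xf /enc /= /chiG col_mxEu col_mxEd.
have es i : xf (col_mx (col_mx p c) s) 2 i = s i 0.
  by rewrite /xf /enc /= /psiG col_mxEd.
have E i : (p + s + A *m (c + s)) i 0 = p i 0 + s i 0 + \sum_k A i k * (c k 0 + s k 0).
  by rewrite !mxE; congr (_ + _); apply: eq_bigr => k _; rewrite !mxE.
split => [H i|H].
- rewrite ep es; under eq_bigr => k _ do rewrite ec es.
  by rewrite -E H mxE.
- apply/matrixP => i j; rewrite (ord1 j) E mxE -[RHS](H i) ep es.
  by congr (_ + _); apply: eq_bigr => k _; rewrite ec es.
Qed.

End Idx.


Section Sig.
Variable n : nat.
Implicit Types (M : 'M['F_2]_(n, n + n + n)) (pi : 'I_n -> nat -> nat).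

Definition sig pi (j : 'I_(n + n + n)) := enc (pi (vtx j) (kind j)) (vtx j).
Definition xsig pi (x : 'cV['F_2]_(n + n + n)) : 'cV['F_2]_(n + n + n) := \col_j x (sig pi j) 0.
Definition invol pi := forall v k, (k < 3)%N -> (pi v k < 3)%N /\ pi v (pi v k) = k.
Definition Rel M' M pi := invol pi /\ forall x, M' *m x = 0 <-> M *m xsig pi x = 0.

Variable pi : 'I_n -> nat -> nat.
Hypothesis hpi : invol pi.

Lemma vtx_sig j : vtx (sig pi j) = vtx j.
Proof. by rewrite /sig vtx_enc. Qed.
Lemma kind_sig j : kind (sig pi j) = pi (vtx j) (kind j).
Proof. by rewrite /sig kind_enc //; case: (hpi (vtx j) (kind_lt3 j)). Qed.
Lemma sigK j : sig pi (sig pi j) = j.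
Proof.
rewrite {1}/sig vtx_sig kind_sig; case: (hpi (vtx j) (kind_lt3 j)) => _ ->.
exact: encK.
Qed.
Lemma sig_inj : injective (sig pi).
Proof. by move=> a b e; rewrite -(sigK a) e sigK. Qed.
Lemma xsigK x : xsig pi (xsig pi x) = x.
Proof. by apply/matrixP => i j; rewrite (ord1 j) !mxE sigK. Qed.
Lemma mem_sig (S : {set 'I_(n + n + n)}) j : (j \in sig pi @: S) = (sig pi j \in S).
Proof.
apply/imsetP/idP => [[y yS ->]|h]; first by rewrite sigK.
by exists (sig pi j); rewrite ?sigK.
Qed.
Lemma sig_sig (S : {set 'I_(n + n + n)}) : sig pi @: (sig pi @: S) = S.
Proof. by apply/setP => j; rewrite !mem_sig sigK. Qed.
Lemma sig_sub (S U : {set 'I_(n + n + n)}) : (sig pi @: S \subset sig pi @: U) = (S \subset U).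
Proof.
apply/idP/idP => h; last exact: imsetS.
by rewrite -(sig_sig S) -(sig_sig U) imsetS.
Qed.
Lemma sig_proper (S U : {set 'I_(n + n + n)}) : (sig pi @: S \proper sig pi @: U) = (S \proper U).
Proof. by rewrite /proper !sig_sub. Qed.
Lemma card_sig (S : {set 'I_(n + n + n)}) : #|sig pi @: S| = #|S|.
Proof. apply: card_imset; exact: sig_inj. Qed.

Lemma Rel_sym M' M : Rel M' M pi -> Rel M M' pi.
Proof.
move=> [_ H]; split=> // y; rewrite -{1}(xsigK y); split => h; first by apply/H.
by apply/H.
Qed.

Lemma dep_transfer M' M C : Rel M' M pi -> dependent M' C -> dependent M (sig pi @: C).
Proof.
move=> [_ H] [x [nz sup Mx]]; exists (xsig pi x); split.
- apply: contra nz => /eqP h; apply/eqP; rewrite -(xsigK x) h.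
  by apply/matrixP => i j; rewrite !mxE.
- by move=> j; rewrite mem_sig mxE => /sup.
- by apply/H.
Qed.

Lemma dep_iff M' M C : Rel M' M pi -> dependent M' C <-> dependent M (sig pi @: C).
Proof.
move=> R; split; first exact: dep_transfer.
by move/(dep_transfer (Rel_sym R)); rewrite sig_sig.
Qed.

Lemma circ_transfer M' M T C : Rel M' M pi ->
  circuit_restr M' T C -> circuit_restr M (sig pi @: T) (sig pi @: C).
Proof.
move=> R [sub dep mn]; split.
- exact: imsetS.
- exact: (dep_transfer R dep).
- move=> D pD dD; apply: (mn (sig pi @: D)).
    by rewrite -sig_proper sig_sig.
  by apply/(dep_iff _ R); rewrite sig_sig.
Qed.

Lemma circ_iff M' M T C : Rel M' M pi ->
  circuit_restr M' T C <-> circuit_restr M (sig pi @: T) (sig pi @: C).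
Proof.
move=> R; split; first exact: circ_transfer.
by move/(circ_transfer (Rel_sym R)); rewrite !sig_sig.
Qed.

Lemma trans_transfer (T : {set 'I_(n + n + n)}) :
  ias_transversal T -> ias_transversal (sig pi @: T).
Proof.
move=> H v; rewrite -(H v) -(card_sig (T :&: [set phiG v; chiG v; psiG v])).
apply: eq_card => j; rewrite mem_sig !in_setI triple_vtx triple_vtx vtx_sig.
by rewrite mem_sig.
Qed.

End Sig.


Section K.
Variable n : nat.
Implicit Types (M : 'M['F_2]_(n, n + n + n)) (A : 'M['F_2]_n).

Definition P2 M k1 k2 := exists T : {set 'I_(n + n + n)}, ias_transversal T /\
      exists C1 C2 : {set 'I_(n + n + n)},
        [/\ circuit_restr M T C1, circuit_restr M T C2,
            [disjoint C1 & C2], #|C1| = k1 /\ #|C2| = k2 &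
            forall C, circuit_restr M T C -> C \subset C1 :|: C2 ->
              C = C1 \/ C = C2].

Lemma sig_disj pi (C1 C2 : {set 'I_(n + n + n)}) : invol pi ->
  [disjoint C1 & C2] -> [disjoint sig pi @: C1 & sig pi @: C2].
Proof.
move=> hpi; rewrite !disjoints_subset => /subsetP h; apply/subsetP => j.
by rewrite !inE !mem_sig // => /h; rewrite inE.
Qed.

Lemma P2_transfer M' M pi k1 k2 : Rel M' M pi -> P2 M' k1 k2 -> P2 M k1 k2.
Proof.
move=> R [T [tT [C1 [C2 [c1 c2 dj [s1 s2] oth]]]]].
have hpi := R.1.
exists (sig pi @: T); split; first exact: (trans_transfer hpi).
exists (sig pi @: C1), (sig pi @: C2); split.
- exact: (circ_transfer hpi R).
- exact: (circ_transfer hpi R).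
- exact: sig_disj.
- by rewrite !(card_sig hpi).
- move=> C cC sC.
  have cC' : circuit_restr M' T (sig pi @: C).
    by apply/(circ_iff hpi _ _ R); rewrite sig_sig.
  have sC' : sig pi @: C \subset C1 :|: C2.
    by rewrite -(sig_sig hpi (C1 :|: C2)) sig_sub // imsetU.
  by case: (oth _ cC' sC') => <-; [left|right]; rewrite sig_sig.
Qed.

Lemma kerF_ext A f g : (forall k v, (k < 3)%N -> f k v = g k v) -> kerF A f -> kerF A g.
Proof.
move=> H Hf i; rewrite -!H //; under eq_bigr => k _ do rewrite -!H //.
exact: Hf.
Qed.

Lemma Rel_kerF A' A pi : invol pi ->
  (forall f, kerF A' f <-> kerF A (fun k v => f (pi v k) v)) ->
  Rel (IASm A') (IASm A) pi.
Proof.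
move=> hpi H; split => // x.
have E k v : (k < 3)%N -> xf x (pi v k) v = xf (xsig pi x) k v.
  move=> hk; rewrite /xf mxE /sig vtx_enc kind_enc //.
split => h.
- move/IAS_kerF/H: h => h; apply/IAS_kerF; apply: kerF_ext h => k v hk; by rewrite E.
- move/IAS_kerF: h => h; apply/IAS_kerF/H; apply: kerF_ext h => k v hk; by rewrite E.
Qed.

Lemma sum_delta (i : 'I_n) (c : 'F_2) (y : 'I_n -> 'F_2) :
  \sum_k ((i == k)%:R * c) * y k = c * y i.
Proof.
rewrite (bigD1 i) //= eqxx mul1r big1 ?addr0 // => k /negbTE.
by rewrite eq_sym => ->; rewrite mul0r mul0r.
Qed.

Definition pid (d : 'I_n -> bool) (v : 'I_n) (k : nat) : nat :=
  if d v then (if k == 1%N then 2%N else if k == 2%N then 1%N else k) else k.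

Lemma invol_pid d : invol (pid d).
Proof. move=> v [|[|[|k]]] //; rewrite /pid; by case: (d v). Qed.

Lemma kerF_diag A' A (d : 'I_n -> bool) :
  (forall i j, A' i j = A i j + (i == j)%:R * (d i)%:R) ->
  forall f, kerF A' f <-> kerF A (fun k v => f (pid d v k) v).
Proof.
move=> HA f.
suff E i : f 0%N i + f 2%N i + \sum_k A' i k * (f 1%N k + f 2%N k) =
    f (pid d i 0) i + f (pid d i 2) i + \sum_k A i k * (f (pid d k 1) k + f (pid d k 2) k).
  by split => H i; [rewrite -E | rewrite E].
under eq_bigr => k _ do rewrite HA mulrDl.
rewrite big_split /= sum_delta.
have -> : \sum_k A i k * (f (pid d k 1) k + f (pid d k 2) k) = \sum_k A i k * (f 1%N k + f 2%N k).
  by apply: eq_bigr => k _; rewrite /pid; case: (d k) => //=; rewrite addrC.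
rewrite /pid; case: (d i) => /=.
all: move: (\sum_(k < n) A i k * (f 1%N k + f 2%N k)) => S.
all: by case: (F2P (f 0%N i)) => ->; case: (F2P (f 1%N i)) => ->; case: (F2P (f 2%N i)) => ->;
  case: (F2P S) => ->; apply/eqP.
Qed.

End K.


Ltac f2c x := case: (F2P x) => ->.

Section NS.
Variable n : nat.
Implicit Types (A : 'M['F_2]_n).

Definition pins A (v w : 'I_n) (k : nat) : nat :=
  if w == v then
    (if A v v == 1 then (if k == 0%N then 1%N else if k == 1%N then 0%N else k)
     else (if k == 0%N then 2%N else if k == 2%N then 0%N else k))
  else k.

Lemma invol_pins A v : invol (pins A v).
Proof.
move=> w [|[|[|k]]] //; rewrite /pins; case: (w == v) => //; by case: (A v v == 1).
Qed.

Lemma kerF_ns A' A v (a : 'I_n -> 'F_2) : a v = 0 ->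
  (forall i, i != v -> A i v = a i) -> (forall j, j != v -> A v j = a j) ->
  (forall i j, A' i j = A i j + a i * a j) ->
  forall f, kerF A' f <-> kerF A (fun k w => f (pins A v w k) w).
Proof.
move=> av Aiv Avj HA f.
set g := fun k w => f (pins A v w k) w.
set y := fun k => f 1%N k + f 2%N k.
have gw w k : w != v -> g k w = f k w by rewrite /g /pins => /negbTE ->.
set P := \sum_k a k * y k.
set L := fun i => f 0%N i + f 2%N i + \sum_k A' i k * (f 1%N k + f 2%N k).
set Rr := fun i => g 0%N i + g 2%N i + \sum_k A i k * (g 1%N k + g 2%N k).
have hL i : L i = f 0%N i + f 2%N i + \sum_k A i k * y k + a i * P.
  rewrite /L -[RHS]addrA; congr (_ + _).
  under eq_bigr => k _ do rewrite HA mulrDl.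
  by rewrite big_split /= /P mulr_sumr; congr (_ + _); apply: eq_bigr => k _; rewrite mulrA.
have hR i : Rr i = g 0%N i + g 2%N i + \sum_k A i k * y k + A i v * (g 1%N v + g 2%N v + y v).
  rewrite /Rr -[RHS]addrA; congr (_ + _).
  rewrite (bigD1 v) //= [in RHS](bigD1 v) //=.
  have -> : \sum_(k < n | k != v) A i k * (g 1%N k + g 2%N k) = \sum_(k < n | k != v) A i k * y k.
    by apply: eq_bigr => k kv; rewrite !gw.
  move: (\sum_(k < n | k != v) A i k * y k) => X.
  by f2c (A i v); f2c (g 1%N v + g 2%N v); f2c (y v); f2c X; apply/eqP.
have SvP : \sum_k A v k * y k = A v v * y v + P.
  rewrite (bigD1 v) //= /P [\sum_k a k * y k](bigD1 v) //= av mul0r add0r; congr (_ + _).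
  by apply: eq_bigr => k kv; rewrite Avj.
set D := g 1%N v + g 2%N v + y v.
have LvPD : L v = P + D.
  rewrite hL SvP av mul0r addr0 /D /y /g /pins eqxx.
  by f2c (A v v) => /=; f2c P; f2c (f 0%N v); f2c (f 1%N v); f2c (f 2%N v); apply/eqP.
have RvLv : Rr v = L v.
  rewrite hR SvP LvPD -/D /D /y /g /pins eqxx.
  by f2c (A v v) => /=; f2c P; f2c (f 0%N v); f2c (f 1%N v); f2c (f 2%N v); apply/eqP.
have Li i : i != v -> L i = Rr i + a i * L v.
  move=> iv; rewrite hL hR LvPD (gw _ 0%N iv) (gw _ 2%N iv) Aiv // -/D.
  move: (f 0%N i + f 2%N i + \sum_k A i k * y k) => X.
  by f2c X; f2c (a i); f2c P; f2c D; apply/eqP.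
split => H i.
- have Lv0 : L v = 0 by exact: H.
  have : Rr i = 0.
    case: (eqVneq i v) => [->|iv]; first by rewrite RvLv.
    by have := H i; rewrite -/(L i) Li // Lv0 mulr0 addr0.
  by [].
- have Lv0 : L v = 0 by rewrite -RvLv; exact: H.
  rewrite -/(L i); case: (eqVneq i v) => [->//|iv].
  by rewrite Li // Lv0 mulr0 addr0; exact: H.
Qed.

End NS.


Section G.
Variable n : nat.
Implicit Types (G : lsgraph n).

Lemma in_setXor (T : finType) (A B : {set T}) x : (x \in setXor A B) = (x \in A) (+) (x \in B).
Proof. by rewrite /setXor !inE; case: (x \in A); case: (x \in B). Qed.

Lemma natr_addb (b1 b2 : bool) : ((b1 (+) b2)%:R : 'F_2) = b1%:R + b2%:R.
Proof. by case: b1; case: b2 => //=; apply/eqP. Qed.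

Lemma natr_andb (b1 b2 : bool) : ((b1 && b2)%:R : 'F_2) = b1%:R * b2%:R.
Proof. by case: b1; case: b2 => //=; rewrite ?mul1r ?mul0r ?mulr0. Qed.

Lemma adj_sym G i j : adjacent G i j = adjacent G j i.
Proof. by rewrite /adjacent eq_sym setUC. Qed.

Lemma adj_irr G i : adjacent G i i = false.
Proof. by rewrite /adjacent eqxx. Qed.

Lemma nbr_pairs_mem G v i j : i != j ->
  ([set i; j] \in nbr_pairs G v) = adjacent G v i && adjacent G v j.
Proof.
move=> ij; apply/idP/idP.
- case/imset2P => x y; rewrite !inE => hx /andP [hy _] e.
  have hi : i \in [set x; y] by rewrite -e !inE eqxx.
  have hj : j \in [set x; y] by rewrite -e !inE eqxx orbT.
  have H z : z \in [set x; y] -> adjacent G v z.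
    by rewrite !inE => /orP [] /eqP ->.
  by rewrite (H _ hi) (H _ hj).
- move=> /andP [hi hj]; apply/imset2P; exists i j => //; by rewrite !inE ?hi ?hj ?ij.
Qed.

Definition av G v (i : 'I_n) : 'F_2 := (adjacent G v i)%:R.

Lemma adjmx_l G v i j :
  adjmx (loc_l G v) i j = adjmx G i j + (i == j)%:R * (i == v)%:R.
Proof.
rewrite !mxE; case: (eqVneq i j) => [e|ij] /=; rewrite -?e; last by rewrite mul0r addr0.
by rewrite mul1r in_setXor inE natr_addb.
Qed.

Lemma adjmx_ns G v i j :
  adjmx (loc_ns G v) i j = adjmx G i j + av G v i * av G v j.
Proof.
rewrite !mxE /av; case: (eqVneq i j) => [e|ij] /=; rewrite -?e.
- rewrite in_setXor natr_addb inE -natr_andb andbb //.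
- by rewrite /adjacent ij /= in_setXor natr_addb nbr_pairs_mem // natr_andb.
Qed.

Lemma adjmx_s G v i j :
  adjmx (loc_s G v) i j = (adjmx G i j + av G v i * av G v j) + (i == j)%:R * (adjacent G v i)%:R.
Proof.
rewrite !mxE /av; case: (eqVneq i j) => [e|ij] /=; rewrite -?e.
- rewrite mul1r -natr_andb andbb -addrA F2dbl addr0 //.
- by rewrite mul0r addr0 /adjacent ij /= in_setXor natr_addb nbr_pairs_mem // natr_andb.
Qed.

Lemma Rel_l G v : Rel (IAS (loc_l G v)) (IAS G) (pid (fun w => w == v)).
Proof. apply: Rel_kerF; first exact: invol_pid. apply: kerF_diag => i j; exact: adjmx_l. Qed.

Lemma ns_hyps G v : [/\ av G v v = 0, (forall i, i != v -> adjmx G i v = av G v i) &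
  (forall j, j != v -> adjmx G v j = av G v j)].
Proof.
split.
- by rewrite /av adj_irr.
- by move=> i iv; rewrite mxE (negbTE iv) /av adj_sym.
- by move=> j vj; rewrite mxE eq_sym (negbTE vj) /av.
Qed.

Lemma Rel_ns G v : Rel (IAS (loc_ns G v)) (IAS G) (pins (adjmx G) v).
Proof.
apply: Rel_kerF; first exact: invol_pins.
case: (ns_hyps G v) => h1 h2 h3.
exact: (kerF_ns h1 h2 h3 (adjmx_ns G v)).
Qed.

Definition Bs G v : 'M['F_2]_n := \matrix_(i, j) (adjmx G i j + av G v i * av G v j).

Lemma Rel_s1 G v : Rel (IAS (loc_s G v)) (IASm (Bs G v)) (pid (adjacent G v)).
Proof.
apply: Rel_kerF; first exact: invol_pid.
apply: kerF_diag => i j; by rewrite adjmx_s [Bs G v i j]mxE.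
Qed.

Lemma Rel_s2 G v : Rel (IASm (Bs G v)) (IAS G) (pins (adjmx G) v).
Proof.
apply: Rel_kerF; first exact: invol_pins.
case: (ns_hyps G v) => h1 h2 h3.
apply: (kerF_ns (A' := Bs G v) h1 h2 h3) => i j; by rewrite [Bs G v i j]mxE.
Qed.

Lemma P2_back G H k1 k2 : loc_equiv G H -> P2 (IAS H) k1 k2 -> P2 (IAS G) k1 k2.
Proof.
elim => // {}H v _ IH h; apply: IH.
- exact: (P2_transfer (Rel_l H v)).
- exact: (P2_transfer (Rel_s2 H v) (P2_transfer (Rel_s1 H v) h)).
- exact: (P2_transfer (Rel_ns H v)).
Qed.

End G.



Section N.
Variable n : nat.
Implicit Types (G : lsgraph n).

Definition ku G (u : 'I_n) : nat := if u \in loops G then 2%N else 1%N.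
Definition nset G u : {set 'I_(n + n + n)} := enc (ku G u) u |: [set enc 0 w | w in nbhd G u].
Definition ind (S : {set 'I_(n + n + n)}) : 'cV['F_2]_(n + n + n) := \col_j (j \in S)%:R.

Lemma ku_lt3 G u : (ku G u < 3)%N.
Proof. by rewrite /ku; case: ifP. Qed.
Lemma ku_neq0 G u : ku G u != 0%N.
Proof. by rewrite /ku; case: ifP. Qed.

Lemma mem_nset G u j : (j \in nset G u) =
  ((kind j == ku G u) && (vtx j == u)) || ((kind j == 0%N) && adjacent G u (vtx j)).
Proof.
rewrite /nset in_setU1 enc_eq ?ku_lt3 //; congr (_ || _).
apply/imsetP/andP => [[w hw ->]|[/eqP k0 hv]].
- by rewrite kind_enc // vtx_enc eqxx; move: hw; rewrite inE.
- exists (vtx j); first by rewrite inE.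
  by rewrite -k0 encK.
Qed.

Lemma enc0_inj : injective (@enc n 0).
Proof. by move=> x y /enc_inj [] //. Qed.

Lemma card_nset G u : #|nset G u| = (degree G u).+1.
Proof.
rewrite cardsU1 card_imset; last exact: enc0_inj.
suff -> : enc (ku G u) u \notin [set enc 0 w | w in nbhd G u] by [].
apply/imsetP => [[w _ e]].
have [k0 _] := enc_inj (ku_lt3 G u) (isT : (0 < 3)%N) e.
by move: (ku_neq0 G u); rewrite k0.
Qed.

Lemma ind_E S j : ind S j 0 = (j \in S)%:R.
Proof. by rewrite mxE. Qed.

Lemma loopE G u : adjmx G u u = (u \in loops G)%:R.
Proof. by rewrite mxE eqxx. Qed.
Lemma adjE G i j : i != j -> adjmx G i j = (adjacent G i j)%:R.
Proof. by rewrite mxE => /negbTE ->. Qed.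

Lemma nset_ker G u : IAS G *m ind (nset G u) = 0.
Proof.
apply/IAS_kerF => i.
have f0 w : xf (ind (nset G u)) 0 w = (adjacent G u w)%:R.
  by rewrite /xf ind_E mem_nset kind_enc // vtx_enc eqxx /= eq_sym (negbTE (ku_neq0 G u)).
have f12 w : xf (ind (nset G u)) 1 w + xf (ind (nset G u)) 2 w = (w == u)%:R.
  rewrite /xf !ind_E !mem_nset !kind_enc // !vtx_enc /ku.
  by case: (u \in loops G); case: (w == u) => /=; rewrite ?addr0 ?add0r.
have f2 w : xf (ind (nset G u)) 2 w = ((w == u) && (u \in loops G))%:R.
  rewrite /xf ind_E mem_nset kind_enc // vtx_enc /ku.
  by case: (u \in loops G); case: (w == u).
under eq_bigr => k _ do rewrite f12.
rewrite f0 f2.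
have -> : \sum_k adjmx G i k * (k == u)%:R = adjmx G i u.
  rewrite (bigD1 u) //= eqxx mulr1 big1 ?addr0 // => k /negbTE ->; by rewrite mulr0.
case: (eqVneq i u) => [->|iu].
- by rewrite adj_irr /= add0r loopE F2dbl.
- by rewrite adjE // adj_sym /= addr0 F2dbl.
Qed.

End N.



Lemma F2_add0 (x y : 'F_2) : x + y = 0 -> x = y.
Proof. by f2c x; f2c y; move/eqP. Qed.

Section S.
Variable n : nat.
Implicit Types (G : lsgraph n).

Lemma single G (a0 : 'I_(n + n + n)) (x : 'cV['F_2]_(n + n + n)) :
  IAS G *m x = 0 ->
  (forall j, x j 0 != 0 -> j = a0 \/ (kind j = 0%N /\ vtx j != vtx a0)) ->
  [/\ kind a0 = 0%N -> x = 0,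
      kind a0 != 0%N -> x a0 0 = 1 -> kind a0 = ku G (vtx a0) &
      kind a0 = ku G (vtx a0) -> forall j, x j 0 = x a0 0 * (j \in nset G (vtx a0))%:R].
Proof.
move=> /IAS_kerF K S.
set u := vtx a0; set c := x a0 0; set k0 := kind a0.
have ea0 : a0 = enc k0 u by rewrite encK.
have k0lt : (k0 < 3)%N by exact: kind_lt3.
have fz k w : (k < 3)%N -> enc k w != a0 -> (k != 0%N) || (w == u) -> xf x k w = 0.
  move=> hk ne h; rewrite /xf; case: (F2P (x (enc k w) 0)) => // e.
  have := S (enc k w); rewrite e => /(_ isT) [e'|[hk0 hv]]; first by rewrite e' eqxx in ne.
  move: h hv; rewrite kind_enc // in hk0; by rewrite hk0 vtx_enc /= => ->.
have xfc : xf x k0 u = c by rewrite /xf -ea0.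
have encne k w : (k < 3)%N -> k != k0 -> enc k w != a0.
  move=> hk; apply: contra => /eqP e; by rewrite -(kind_enc w hk) e.
have encne' k w : (k < 3)%N -> w != u -> enc k w != a0.
  move=> hk; apply: contra => /eqP e; by rewrite -(vtx_enc k w) e.
have k12 : k0 != 0%N -> (k0 == 1%N) || (k0 == 2%N).
  by move: k0lt; rewrite /k0; case: (kind a0) => [|[|[|]]].
have common : k0 != 0%N ->
  (forall i, i != u -> xf x 0 i = adjmx G i u * c) /\ ((k0 == 2%N)%:R * c + adjmx G u u * c = 0).
  move=> k0n.
  have f0u : xf x 0 u = 0 by apply: fz; rewrite ?eqxx ?orbT //; apply: encne; rewrite // eq_sym.
  have f2i i : i != u -> xf x 2 i = 0 by move=> iu; apply: fz => //; apply: encne'.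
  have f2u : xf x 2 u = (k0 == 2%N)%:R * c.
    case: (eqVneq k0 2%N) => [e|ne]; first by rewrite mul1r -xfc e.
    by rewrite mul0r; apply: fz => //; apply: encne; rewrite // eq_sym.
  have f12 k : xf x 1 k + xf x 2 k = (k == u)%:R * c.
    case: (eqVneq k u) => [->|ku']; last first.
      by rewrite !fz //; [rewrite mul0r addr0 | apply: encne' | apply: encne'].
    case/orP: (k12 k0n) => /eqP e; rewrite e in xfc f2u.
    + by rewrite xfc f2u mul0r addr0 /= mul1r.
    + rewrite f2u mul1r fz ?add0r /= ?mul1r //; apply: encne; by rewrite ?e.
  have sumE i : \sum_k adjmx G i k * (xf x 1 k + xf x 2 k) = adjmx G i u * c.
    under eq_bigr => k _ do rewrite f12.
    rewrite (bigD1 u) //= eqxx mul1r big1 ?addr0 // => k /negbTE ->.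
    by rewrite mul0r mulr0.
  split.
  + move=> i iu; have := K i; rewrite f2i // addr0 sumE; exact: F2_add0.
  + by have := K u; rewrite f0u add0r f2u sumE.
split.
- move=> k00.
  have f1 w : xf x 1 w = 0 by apply: fz => //; apply: encne; rewrite // k00.
  have f2 w : xf x 2 w = 0 by apply: fz => //; apply: encne; rewrite // k00.
  have f0 i : xf x 0 i = 0.
    have := K i; rewrite f2; under eq_bigr => k _ do rewrite f1 f2 addr0 mulr0.
    by rewrite big1 // !addr0.
  have c0 : c = 0 by rewrite -xfc k00 f0.
  apply/matrixP => j k; rewrite (ord1 k) mxE; case: (F2P (x j 0)) => e; first by rewrite e.
  have := S j; rewrite e => /(_ isT) [ej|[kj _]]; first by rewrite ej -/c c0 in e.
  by have := encK j; rewrite kj => ej; move: (f0 (vtx j)); rewrite /xf ej e.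
- move=> k0n c1; have [_] := common k0n; rewrite -/c c1 !mulr1 loopE /ku.
    case/orP: (k12 k0n) => /eqP ->; case: (u \in loops G) => //=;
    by rewrite ?add0r ?addr0 => /eqP.
- move=> k0k j.
    have k0n : k0 != 0%N by rewrite k0k ku_neq0.
    have [c0 _] := common k0n.
    rewrite mem_nset -k0k.
    case: (eqVneq j a0) => [->|ja].
      by rewrite -/k0 -/u !eqxx /= mulr1.
    case: (boolP ((kind j == 0%N) && (vtx j != u))) => [/andP [/eqP kj vj]|h].
    * rewrite kj /= (eq_sym 0%N) (negbTE k0n) /=.
      have -> : x j 0 = xf x 0 (vtx j) by have := encK j; rewrite kj => ej; rewrite /xf ej.
      by rewrite c0 // adjE // adj_sym mulrC.
    * have -> : x j 0 = 0.
        case: (F2P (x j 0)) => e; first by rewrite e. have := S j; rewrite e => /(_ isT) [e'|[kj vj]]; first by rewrite e' eqxx in ja.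
        by rewrite kj eqxx vj in h.
      case: (boolP ((kind j == k0) && (vtx j == u))) => [/andP [/eqP kj /eqP vj]|_].
        by move: ja; rewrite ea0 -kj -vj encK eqxx.
      case: (boolP ((kind j == 0%N) && adjacent G u (vtx j))) => [/andP [kj aj]|_]; last by rewrite mulr0.
      suff : vtx j != u by move=> vj; rewrite kj vj in h.
      by apply: contraTneq aj => ->; rewrite adj_irr.
Qed.

End S.



Section C.
Variable n : nat.
Implicit Types (G H : lsgraph n) (T C D : {set 'I_(n + n + n)}).

Definition kap G u : 'I_(n + n + n) := enc (ku G u) u.

Lemma kap_in G u : kap G u \in nset G u.
Proof. by rewrite /nset setU11. Qed.
Lemma kind_kap G u : kind (kap G u) = ku G u.
Proof. by rewrite kind_enc // ku_lt3. Qed.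
Lemma vtx_kap G u : vtx (kap G u) = u.
Proof. exact: vtx_enc. Qed.

Lemma nset_shape G u j : j \in nset G u -> j = kap G u \/ (kind j = 0%N /\ vtx j != u).
Proof.
rewrite mem_nset => /orP [/andP [/eqP k /eqP v]|/andP [/eqP k a]].
- by left; rewrite /kap -k -v encK.
- right; split => //; by apply: contraTneq a => ->; rewrite adj_irr.
Qed.

Lemma nset_only G u (x : 'cV['F_2]_(n + n + n)) : IAS G *m x = 0 ->
  (forall j, x j 0 != 0 -> j \in nset G u) ->
  forall j, x j 0 = x (kap G u) 0 * (j \in nset G u)%:R.
Proof.
move=> K S.
have [_ _ h] := single K (a0 := kap G u) (fun j nz => eq_ind_r (fun w => j = kap G u \/ kind j = 0%N /\ vtx j != w) (nset_shape (S j nz)) (vtx_kap G u)).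
by move: h; rewrite vtx_kap kind_kap => /(_ erefl).
Qed.

Lemma ind_nz (A : {set 'I_(n + n + n)}) j : j \in A -> ind A != 0.
Proof.
move=> jS; apply/eqP => /matrixP /(_ j 0); rewrite !mxE jS => /eqP; by [].
Qed.

Lemma nset_dep G u : dependent (IAS G) (nset G u).
Proof.
exists (ind (nset G u)); split.
- exact: (ind_nz (kap_in G u)).
- by move=> j /negbTE; rewrite mxE => ->.
- exact: nset_ker.
Qed.

Lemma circ_min (M : 'M['F_2]_(n, n + n + n)) T (C D : {set 'I_(n + n + n)}) :
  circuit_restr M T C -> dependent M D -> D \subset C -> D = C.
Proof.
move=> [_ _ mn] dD sDC; apply/eqP; apply: contraT => ne.
by case: (mn D) => //; rewrite properEneq ne.
Qed.

Lemma nset_circ G T u : nset G u \subset T -> circuit_restr (IAS G) T (nset G u).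
Proof.
move=> sT; split => //; first exact: nset_dep.
move=> D pD [x [nz sup K]].
have S j : x j 0 != 0 -> j \in nset G u.
  move=> h; apply: (subsetP (proper_sub pD)); apply: contraR h => /sup ->; by [].
have E := nset_only K S.
have c1 : x (kap G u) 0 = 1.
  case: (F2P (x (kap G u) 0)) => // c0.
  have x0 : x = 0 by apply/matrixP => j k; rewrite (ord1 k) E c0 mul0r mxE.
  by rewrite x0 eqxx in nz.
have : nset G u \subset D.
  apply/subsetP => j jn; apply: contraT => /sup; rewrite E c1 jn mul1r => /eqP; by [].
by move: pD; rewrite properE => /andP [_ /negP].
Qed.

End C.



Section D.
Variable n : nat.
Implicit Types (G H : lsgraph n) (T C D : {set 'I_(n + n + n)}).

Definition Tset G (a b : 'I_n) : {set 'I_(n + n + n)} :=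
  [set j | ((kind j == ku G (vtx j)) && ((vtx j == a) || (vtx j == b))) ||
           ((kind j == 0%N) && ~~ ((vtx j == a) || (vtx j == b)))].

Lemma Tset_trans G a b : ias_transversal (Tset G a b).
Proof.
move=> v.
have -> : Tset G a b :&: [set phiG v; chiG v; psiG v] =
  [set enc (if (v == a) || (v == b) then ku G v else 0%N) v].
  apply/setP => j; rewrite in_setI triple_vtx in_set1 enc_eq; last by case: ifP; rewrite ?ku_lt3.
  rewrite inE; case: (eqVneq (vtx j) v) => [->|_]; last by rewrite !andbF.
  by rewrite !andbT; case: ((v == a) || (v == b)); rewrite ?andbT ?andbF ?orbF.
by rewrite cards1.
Qed.

Lemma disj_nset G a b : ~~ adjacent G a b -> a != b ->
  (forall w, ~~ (adjacent G a w && adjacent G b w)) -> [disjoint nset G a & nset G b].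
Proof.
move=> nab ab nc; rewrite -setI_eq0; apply/eqP/setP => j; rewrite in_setI in_set0 !mem_nset.
apply/negP => /andP [/orP [/andP [/eqP k1 /eqP v1]|/andP [/eqP k1 a1]] /orP [/andP [/eqP k2 /eqP v2]|/andP [/eqP k2 a2]]].
- by move: ab; rewrite -v1 -v2 eqxx.
- by move: (ku_neq0 G a); rewrite -k1 k2.
- by move: (ku_neq0 G b); rewrite -k2 k1.
- by move: (nc (vtx j)); rewrite a1 a2.
Qed.

Lemma nset_sub_T G a b : ~~ adjacent G a b -> nset G a \subset Tset G a b.
Proof.
move=> nab; apply/subsetP => j; rewrite mem_nset inE => /orP [/andP [/eqP k /eqP v]|/andP [/eqP k aj]].
- by rewrite k v !eqxx.
- have va : vtx j != a by apply: contraTneq aj => ->; rewrite adj_irr.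
  have vb : vtx j != b by apply: contraTneq aj => ->; rewrite (negbTE nab).
  by rewrite k (negbTE va) (negbTE vb) eqxx orbT.
Qed.

Lemma config_P2 H a b k1 k2 : (0 < k1)%N -> (0 < k2)%N -> a != b -> ~~ adjacent H a b ->
  degree H a = k1.-1 -> degree H b = k2.-1 ->
  (forall w, ~~ (adjacent H a w && adjacent H b w)) -> P2 (IAS H) k1 k2.
Proof.
move=> hk1 hk2 ab nab da db nc.
have nba : ~~ adjacent H b a by rewrite adj_sym.
have nc' : forall w, ~~ (adjacent H b w && adjacent H a w) by move=> w; rewrite andbC.
have sa := nset_sub_T nab.
have sb : nset H b \subset Tset H a b.
  apply: (subset_trans (nset_sub_T nba)); apply/subsetP => j; rewrite !inE.
  by rewrite (orbC (vtx j == b)).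
have dj := disj_nset nab ab nc.
exists (Tset H a b); split; first exact: Tset_trans.
exists (nset H a), (nset H b); split.
- exact: nset_circ.
- exact: nset_circ.
- exact: dj.
- by rewrite !card_nset da db !prednK.
- move=> C cC sC; case: (cC) => _ [x [nz sup K]] _.
  set c := x (kap H a) 0; set d := x (kap H b) 0.
  have kbna : kap H b \notin nset H a by rewrite (disjointFl dj (kap_in H b)).
  set y := x + c *: ind (nset H a).
  have Ky : IAS H *m y = 0 by rewrite mulmxDr -scalemxAr nset_ker scaler0 K addr0.
  have yE j : y j 0 = x j 0 + c * (j \in nset H a)%:R by rewrite !mxE.
  have xa : y (kap H a) 0 = 0 by rewrite yE kap_in mulr1 F2dbl.
  have Sy j : y j 0 != 0 -> j = kap H b \/ (kind j = 0%N /\ vtx j != vtx (kap H b)).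
    move=> h; rewrite vtx_kap.
    have jC : j \in nset H a :|: nset H b.
      case: (boolP (j \in nset H a)) => ja; first by rewrite inE ja.
      apply: (subsetP sC); apply: contraR h => /sup; rewrite yE (negbTE ja) => ->.
      by rewrite mulr0 addr0.
    move: jC; rewrite inE => /orP [ja|jb]; last exact: nset_shape.
    have jk : j != kap H a by apply: contraNneq h => ->; rewrite xa.
    move: ja; rewrite mem_nset => /orP [/andP [/eqP k /eqP v]|/andP [/eqP k aj]].
      by move: jk; rewrite /kap -k -v encK eqxx.
    right; split => //; apply: contraTneq aj => ->; by rewrite (negbTE nab).
  have [_ _ L2] := single Ky Sy.
  have yb : y (kap H b) 0 = d by rewrite yE (negbTE kbna) mulr0 addr0.
  have xE j : x j 0 = c * (j \in nset H a)%:R + d * (j \in nset H b)%:R.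
    have := L2 _ j; rewrite yb vtx_kap yE kind_kap => /(_ erefl) <-.
    by rewrite addrCA F2dbl addr0.
  have subC (A : {set 'I_(n + n + n)}) : (forall j, j \in A -> x j 0 != 0) -> A \subset C.
    by move=> h; apply/subsetP => j /h; apply: contraR => /sup ->.
  have cnz : c = 1 \/ d = 1.
    case: (F2P c) => c0; last by left.
    case: (F2P d) => d0; last by right.
    have x0 : x = 0 by apply/matrixP => j k; rewrite (ord1 k) xE c0 d0 !mul0r addr0 mxE.
    by rewrite x0 eqxx in nz.
  case: (F2P c) => c0; case: (F2P d) => d0; try (by case: cnz; rewrite ?c0 ?d0).
  + right; apply/esym/(circ_min cC (nset_dep H b)); apply: subC => j jb.
    by rewrite xE c0 d0 jb mul0r add0r mul1r.
  + left; apply/esym/(circ_min cC (nset_dep H a)); apply: subC => j ja.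
    by rewrite xE c0 d0 ja mul0r addr0 mul1r.
  + exfalso.
    have e : nset H a = C.
      apply: (circ_min cC (nset_dep H a)); apply: subC => j ja.
      by rewrite xE c0 d0 ja (disjointFr dj ja) mulr0 addr0 mul1r.
    have : kap H b \in C.
      by apply: (subsetP (subC _ _)) (kap_in H b) => j jb; rewrite xE c0 d0 jb (disjointFl dj jb) mulr0 add0r mul1r.
    by rewrite -e (negbTE kbna).
Qed.

End D.


Section E.
Variable n : nat.
Implicit Types (G H : lsgraph n) (T C D : {set 'I_(n + n + n)}) (M : 'M['F_2]_(n, n + n + n)).

Definition State M T C1 C2 (a b : 'I_(n + n + n)) :=
  [/\ ias_transversal T, circuit_restr M T C1, circuit_restr M T C2, [disjoint C1 & C2] &
      (forall C, circuit_restr M T C -> C \subset C1 :|: C2 -> C = C1 \/ C = C2)] /\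
      (a \in C1 /\ b \in C2).

Definition Xs C1 C2 (a b : 'I_(n + n + n)) := (C1 :|: C2) :\: [set a; b].
Definition meas C1 C2 (a b : 'I_(n + n + n)) := #|[set j in Xs C1 C2 a b | kind j != 0%N]|.

Lemma State_transfer M' M pi T C1 C2 a b : Rel M' M pi -> State M' T C1 C2 a b ->
  State M (sig pi @: T) (sig pi @: C1) (sig pi @: C2) (sig pi a) (sig pi b).
Proof.
move=> R [[tT c1 c2 dj oth] [aC bC]]; have hpi := R.1.
split; first split.
- exact: (trans_transfer hpi).
- exact: (circ_transfer hpi R).
- exact: (circ_transfer hpi R).
- exact: sig_disj.
- move=> C cC sC.
  have cC' : circuit_restr M' T (sig pi @: C).
    by apply/(circ_iff hpi _ _ R); rewrite (sig_sig hpi).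
  have sC' : sig pi @: C \subset C1 :|: C2.
    by rewrite -(sig_sig hpi (C1 :|: C2)) (sig_sub hpi) // imsetU.
  by case: (oth _ cC' sC') => <-; [left|right]; rewrite (sig_sig hpi).
- by rewrite !(mem_sig hpi) !(sigK hpi).
Qed.

Lemma meas_sig pi C1 C2 a b : invol pi ->
  meas (sig pi @: C1) (sig pi @: C2) (sig pi a) (sig pi b) =
  #|[set j in Xs C1 C2 a b | kind (sig pi j) != 0%N]|.
Proof.
move=> hpi; rewrite /meas -(card_sig hpi [set j in Xs C1 C2 a b | kind (sig pi j) != 0%N]).
apply: eq_card => j; rewrite (mem_sig hpi) !inE (sigK hpi) !(mem_sig hpi).
have e z : (j == sig pi z) = (sig pi j == z).
  by apply/eqP/eqP => [->|<-]; rewrite (sigK hpi).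
by rewrite !e.
Qed.

Lemma T_uniq T j j' : ias_transversal T -> j \in T -> j' \in T -> vtx j = vtx j' -> j = j'.
Proof.
move=> tT jT j'T e; have /eqP/cards1P [z hz] := tT (vtx j).
have h1 : j \in T :&: [set phiG (vtx j); chiG (vtx j); psiG (vtx j)] by rewrite in_setI jT triple_vtx eqxx.
have h2 : j' \in T :&: [set phiG (vtx j); chiG (vtx j); psiG (vtx j)] by rewrite in_setI j'T triple_vtx e eqxx.
by move: h1 h2; rewrite hz !inE => /eqP -> /eqP ->.
Qed.

Lemma T_exists T v : ias_transversal T -> exists2 j, j \in T & vtx j = v.
Proof.
move=> tT; have /eqP/cards1P [z hz] := tT v.
have : z \in T :&: [set phiG v; chiG v; psiG v] by rewrite hz set11.
by rewrite in_setI triple_vtx => /andP [zT /eqP zv]; exists z.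
Qed.

Lemma dep_mono M (A B : {set 'I_(n + n + n)}) : dependent M A -> A \subset B -> dependent M B.
Proof.
move=> [x [nz sup K]] sAB; exists x; split => // j jB; apply: sup.
by apply: contra jB; apply: (subsetP sAB).
Qed.

Lemma dep_circ M T D : D \subset T -> dependent M D -> exists2 C : {set 'I_(n + n + n)}, C \subset D & circuit_restr M T C.
Proof.
have [m] := ubnP #|D|; elim: m D => // m IH D hD sDT dD.
case: (classic (exists D', D' \proper D /\ dependent M D')) => [[D' [pD dD']]|nD].
- have [C sC cC] := IH D' (leq_trans (proper_card pD) (ltnSE hD))
     (subset_trans (proper_sub pD) sDT) dD'.
  by exists C => //; apply: subset_trans sC (proper_sub pD).
- exists D => //; split => // D' pD dD'; apply: nD; by exists D'.
Qed.

Lemma X_sub_T M T C1 C2 a b : State M T C1 C2 a b -> Xs C1 C2 a b \subset T.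
Proof.
case=> [[_ [s1 _ _] [s2 _ _] _ _] _]; apply/subsetP => j; rewrite !inE => /andP [_ /orP [h|h]].
- exact: (subsetP s1).
- exact: (subsetP s2).
Qed.

Lemma indep M T C1 C2 a b : State M T C1 C2 a b -> ~ dependent M (Xs C1 C2 a b).
Proof.
move=> st dX; have [C sC cC] := dep_circ (X_sub_T st) dX.
case: st => [[_ _ _ _ oth] [aC bC]].
have sC' : C \subset C1 :|: C2.
  apply: (subset_trans sC); apply/subsetP => j; rewrite !inE; by case/andP.
have nX z : z \in [set a; b] -> z \notin Xs C1 C2 a b by rewrite !inE => ->.
case: (oth C cC sC') => e; subst C.
- by move: (subsetP sC a aC); apply/negP; apply: nX; rewrite !inE eqxx.
- by move: (subsetP sC b bC); apply/negP; apply: nX; rewrite !inE eqxx orbT.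
Qed.

End E.


Section F.
Variable n : nat.
Implicit Types (G H : lsgraph n) (T C D : {set 'I_(n + n + n)}) (M : 'M['F_2]_(n, n + n + n)).

Definition dk G (u : 'I_n) : nat := if u \in loops G then 1%N else 2%N.

Lemma loop1 G w : (adjmx G w w == 1) = (w \in loops G).
Proof. by rewrite loopE; case: (w \in loops G). Qed.

Lemma pins_dk G w : pins (adjmx G) w w (dk G w) = 0%N.
Proof. by rewrite /pins eqxx loop1 /dk; case: (w \in loops G). Qed.
Lemma pins_ku G w : pins (adjmx G) w w (ku G w) = ku G w.
Proof. by rewrite /pins eqxx loop1 /ku; case: (w \in loops G). Qed.
Lemma pins_other G w u k : u != w -> pins (adjmx G) w u k = k.
Proof. by rewrite /pins => /negbTE ->. Qed.

Lemma kind_cases G j : kind j != 0%N -> kind j = ku G (vtx j) \/ kind j = dk G (vtx j).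
Proof.
rewrite /ku /dk; have := kind_lt3 j; case: (kind j) => [|[|[|]]] // _ _;
  case: (vtx j \in loops G); auto.
Qed.

Lemma ku_ns G w v : adjacent G w v -> ku (loc_ns G w) v = dk G v.
Proof. by move=> h; rewrite /ku /dk /= in_setXor inE h; case: (v \in loops G). Qed.

Lemma ns_state G w T C1 C2 a b : State (IAS G) T C1 C2 a b ->
  let s := sig (pins (adjmx G) w) in
  State (IAS (loc_ns G w)) (s @: T) (s @: C1) (s @: C2) (s a) (s b).
Proof. exact: (State_transfer (Rel_sym (invol_pins (adjmx G) w) (Rel_ns G w))). Qed.

Lemma kind_signs G w j : kind (sig (pins (adjmx G) w) j) = pins (adjmx G) w (vtx j) (kind j).
Proof. exact: (kind_sig (invol_pins (adjmx G) w)). Qed.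

Lemma step1 G T C1 C2 a b j0 : State (IAS G) T C1 C2 a b -> j0 \in Xs C1 C2 a b ->
  kind j0 = dk G (vtx j0) ->
  let s := sig (pins (adjmx G) (vtx j0)) in
  (meas (s @: C1) (s @: C2) (s a) (s b) < meas C1 C2 a b)%N.
Proof.
move=> st jX kj; rewrite /= meas_sig; last exact: invol_pins.
have tT : ias_transversal T by case: st => [[]].
have sXT := X_sub_T st.
set S := [set j in Xs C1 C2 a b | kind j != 0%N].
have j0S : j0 \in S by rewrite inE jX kj /dk; case: ifP.
apply: (leq_trans _ (proper_card (properD1 j0S))).
apply: subset_leq_card; apply/subsetP => j /setIdP [jX' kj']; rewrite in_setD1.
have vj : vtx j != vtx j0.
  apply: contra kj' => /eqP e.
  have -> : j = j0 by apply: (T_uniq tT); [exact: (subsetP sXT _ jX') | exact: (subsetP sXT _ jX) | exact: e].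
  by rewrite kind_signs kj pins_dk.
have kj2 : kind j != 0%N by move: kj'; rewrite kind_signs pins_other.
have -> : (j \in S) by apply/setIdP.
by rewrite andbT; apply: contra vj => /eqP ->.
Qed.

Lemma step2 G T C1 C2 a b j0 w : State (IAS G) T C1 C2 a b -> j0 \in Xs C1 C2 a b ->
  kind j0 = ku G (vtx j0) -> adjacent G (vtx j0) w ->
  (forall t, t \in Xs C1 C2 a b -> vtx t = w -> kind t = ku G w) ->
  let s := sig (pins (adjmx G) w) in
  [/\ (meas (s @: C1) (s @: C2) (s a) (s b) <= meas C1 C2 a b)%N,
      j0 \in Xs (s @: C1) (s @: C2) (s a) (s b) &
      kind j0 = dk (loc_ns G w) (vtx j0)].
Proof.
move=> st jX kj adj hw; set s := sig (pins (adjmx G) w).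
have hpi := invol_pins (adjmx G) w.
have vw : vtx j0 != w by apply: contraTneq adj => ->; rewrite adj_irr.
have sj0 : s j0 = j0 by rewrite /s /sig pins_other // encK.
split.
- rewrite /s meas_sig //; apply: subset_leq_card; apply/subsetP => j.
  move=> /setIdP [jX' kj']; apply/setIdP; split => //; move: kj'; rewrite kind_signs.
  case: (eqVneq (vtx j) w) => [e|ne]; last by rewrite pins_other.
  by rewrite e (hw j jX' e) pins_ku.
- have -> : Xs (s @: C1) (s @: C2) (s a) (s b) = s @: Xs C1 C2 a b.
    apply/setP => z; rewrite (mem_sig hpi) !inE !(mem_sig hpi).
    have e y : (z == s y) = (s z == y) by apply/eqP/eqP => [->|<-]; rewrite /s (sigK hpi).
    by rewrite !e.
  by rewrite (mem_sig hpi) -/s sj0.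
- rewrite kj; have -> : ku G (vtx j0) = dk (loc_ns G w) (vtx j0).
    rewrite /ku /dk /= in_setXor inE adj_sym adj.
    by case: (vtx j0 \in loops G).
  by [].
Qed.

End F.


Section R.
Variable n : nat.
Implicit Types (G H : lsgraph n) (T C D : {set 'I_(n + n + n)}) (M : 'M['F_2]_(n, n + n + n)).

Definition Goal G0 G T C1 C2 (a b : 'I_(n + n + n)) :=
  exists H T' C1' C2' a' b', [/\ loc_equiv G0 H, State (IAS H) T' C1' C2' a' b',
     (meas C1' C2' a' b' < meas C1 C2 a b)%N, #|C1'| = #|C1| & #|C2'| = #|C2|].

Lemma do1 G0 G T C1 C2 a b t : loc_equiv G0 G -> State (IAS G) T C1 C2 a b ->
  t \in Xs C1 C2 a b -> kind t = dk G (vtx t) -> Goal G0 G T C1 C2 a b.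
Proof.
move=> le st tX kt.
set s := sig (pins (adjmx G) (vtx t)).
exists (loc_ns G (vtx t)), (s @: T), (s @: C1), (s @: C2), (s a), (s b); split.
- exact: loc_step_ns.
- exact: ns_state.
- exact: (step1 st tX kt).
- exact: (card_sig (invol_pins (adjmx G) (vtx t))).
- exact: (card_sig (invol_pins (adjmx G) (vtx t))).
Qed.

Lemma reduce G0 G T C1 C2 a b : loc_equiv G0 G -> State (IAS G) T C1 C2 a b ->
  (0 < meas C1 C2 a b)%N -> Goal G0 G T C1 C2 a b.
Proof.
move=> le st m0.
have nd := indep st.
have [j0 /setIdP [jX kj]] := card_gt0P m0.
set v := vtx j0.
case: (kind_cases G kj) => kk; last exact: (do1 le st jX kk).
case: (boolP [exists w, adjacent G v w &&
   [forall t, ((t \in Xs C1 C2 a b) && (vtx t == w)) ==> (kind t == ku G w)]]).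
- case/existsP => w /andP [aw /forallP hw].
  have hw' t : t \in Xs C1 C2 a b -> vtx t = w -> kind t = ku G w.
    by move=> tX tw; apply/eqP; move: (hw t); rewrite tX tw eqxx.
  have [mle jX1 kd] := step2 st jX kk aw hw'.
  have st1 := ns_state w st.
  have := do1 (loc_step_ns w le) st1 jX1 kd.
  move=> [H [T' [C1' [C2' [a' [b' [le' st' mlt c1 c2]]]]]]].
  exists H, T', C1', C2', a', b'; split => //.
  + exact: (leq_trans mlt mle).
  + by rewrite c1 (card_sig (invol_pins (adjmx G) w)).
  + by rewrite c2 (card_sig (invol_pins (adjmx G) w)).
- move/existsPn => hn.
  case: (boolP [exists t, (t \in Xs C1 C2 a b) && adjacent G v (vtx t) && (kind t == dk G (vtx t))]).
  + by case/existsP => t /andP [/andP [tX _] /eqP kt]; exact: (do1 le st tX kt).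
  + move/existsPn => hn2; exfalso; apply: nd; apply: (dep_mono (nset_dep G v)).
    apply/subsetP => j; rewrite mem_nset => /orP [/andP [/eqP k /eqP vj]|/andP [/eqP k aj]].
    * by have -> : j = j0 by rewrite -(encK j) k vj -kk encK.
    * have := hn (vtx j); rewrite aj /= negb_forall => /existsP [t].
      rewrite negb_imply => /andP [/andP [tX /eqP tv] ktn].
      have := hn2 t; rewrite tX tv aj /= => ktd.
      have kt0 : kind t = 0%N.
        case: (eqVneq (kind t) 0%N) => // /(kind_cases G) [] e.
        - by rewrite e tv eqxx in ktn.
        - by rewrite e tv eqxx in ktd.
      by have -> : j = t by rewrite -(encK j) -(encK t) k kt0 tv.
Qed.

Lemma reduce_all G0 m : forall G T C1 C2 a b, (meas C1 C2 a b <= m)%N ->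
  loc_equiv G0 G -> State (IAS G) T C1 C2 a b ->
  exists H T' C1' C2' a' b', [/\ loc_equiv G0 H, State (IAS H) T' C1' C2' a' b',
     meas C1' C2' a' b' = 0%N, #|C1'| = #|C1| & #|C2'| = #|C2|].
Proof.
elim: m => [|m IH] G T C1 C2 a b hm le st.
- by exists G, T, C1, C2, a, b; split => //; apply/eqP; rewrite -leqn0.
- case: (posnP (meas C1 C2 a b)) => [m0|mp].
    by exists G, T, C1, C2, a, b.
  have [H [T' [C1' [C2' [a' [b' [le' st' mlt c1 c2]]]]]]] := reduce le st mp.
  have [H2 [T2 [D1 [D2 [a2 [b2 [le2 st2 m2 d1 d2]]]]]]] :=
    IH H T' C1' C2' a' b' (leq_trans (ltnSE (leq_trans mlt hm)) (leqnn m)) le' st'.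
  by exists H2, T2, D1, D2, a2, b2; split => //; rewrite ?d1 ?d2.
Qed.

Lemma circ_final H T C a : ias_transversal T -> circuit_restr (IAS H) T C -> a \in C ->
  (forall j, j \in C -> j != a -> kind j = 0%N) -> C = nset H (vtx a).
Proof.
move=> tT cC aC h0.
have cC' := cC; case: cC' => sCT [x [nz sup K]] mn.
have Sx : [set j | x j 0 != 0] = C.
  apply: (circ_min cC).
    exists x; split => // j; rewrite inE; by case: (F2P (x j 0)) => ->.
  by apply/subsetP => j; rewrite inE; apply: contraR => /sup ->.
have memC j : (j \in C) = (x j 0 != 0) by rewrite -Sx inE.
have S j : x j 0 != 0 -> j = a \/ (kind j = 0%N /\ vtx j != vtx a).
  rewrite -memC => jC; case: (eqVneq j a) => [->|ja]; first by left.
  right; split; first exact: h0.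
  apply: contra ja => /eqP e; apply/eqP; apply: (T_uniq tT) => //; exact: (subsetP sCT).
have [L0 L1 L2] := single K S.
have ka : kind a != 0%N.
  apply/eqP => /L0 x0; by rewrite x0 eqxx in nz.
have xa : x a 0 = 1 by move: aC; rewrite memC; case: (F2P (x a 0)) => ->.
have kk := L1 ka xa.
apply/setP => j; rewrite memC (L2 kk j) xa mul1r.
by case: (j \in nset H (vtx a)).
Qed.

End R.


Local Close Scope ring_scope.
Unset Implicit Arguments.

Theorem corollary6p1 (n : nat) (G : lsgraph n) (k1 k2 : nat) :
  wf_lsgraph G -> (0 < k1)%N -> (0 < k2)%N ->
  ((exists H : lsgraph n, loc_equiv G H /\
      exists a b : 'I_n,
        [/\ a != b, ~~ adjacent H a b,
            degree H a = k1.-1, degree H b = k2.-1 &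
            forall w, ~~ (adjacent H a w && adjacent H b w)])
   <->
   (exists T : {set 'I_(n + n + n)}, ias_transversal T /\
      exists C1 C2 : {set 'I_(n + n + n)},
        [/\ circuit_restr (IAS G) T C1, circuit_restr (IAS G) T C2,
            [disjoint C1 & C2], #|C1| = k1 /\ #|C2| = k2 &
            forall C, circuit_restr (IAS G) T C -> C \subset C1 :|: C2 ->
              C = C1 \/ C = C2])).
Proof.
move=> _ hk1 hk2; split.
- move=> [H [le [a [b [ab nab da db nc]]]]].
  exact: (P2_back le (config_P2 hk1 hk2 ab nab da db nc)).
- move=> [T [tT [C1 [C2 [c1 c2 dj [s1 s2] oth]]]]].
  have [a aC] : exists a, a \in C1 by apply/card_gt0P; rewrite s1.
  have [b bC] : exists b, b \in C2 by apply/card_gt0P; rewrite s2.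
  have st : State (IAS G) T C1 C2 a b by [].
  have [H [T' [D1 [D2 [a' [b' [le st' m0 d1 d2]]]]]]] :=
    reduce_all (leqnn (meas C1 C2 a b)) (loc_refl G) st.
  case: st' => [[tT' e1 e2 dj' _] [aD bD]].
  have X0 j : j \in Xs D1 D2 a' b' -> kind j = 0%N.
    move=> jX; apply/eqP; apply: contraT => kj.
    have : j \in [set j in Xs D1 D2 a' b' | kind j != 0%N] by apply/setIdP.
    by rewrite (cards0_eq m0) inE.
  have inX j : j \in D1 :|: D2 -> j != a' -> j != b' -> j \in Xs D1 D2 a' b'.
    by move=> jD ja jb; rewrite /Xs in_setD jD !inE (negbTE ja) (negbTE jb).
  have E1 : D1 = nset H (vtx a').
    apply: (circ_final tT' e1 aD) => j jD ja; apply: X0; apply: inX => //.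
      by rewrite inE jD.
    by apply: contraTneq jD => ->; rewrite (disjointFl dj' bD).
  have E2 : D2 = nset H (vtx b').
    apply: (circ_final tT' e2 bD) => j jD jb; apply: X0; apply: inX => //.
      by rewrite inE jD orbT.
    by apply: contraTneq jD => ->; rewrite (disjointFr dj' aD).
  have sT1 : D1 \subset T' by case: e1.
  have sT2 : D2 \subset T' by case: e2.
  have neqab : a' != b' by apply: contraTneq aD => ->; rewrite (disjointFl dj' bD).
  exists H; split => //; exists (vtx a'), (vtx b'); split.
  + apply: contra neqab => /eqP e; apply/eqP; apply: (T_uniq tT') => //.
    * exact: (subsetP sT1).
    * exact: (subsetP sT2).
  + apply/negP => adj.
    have p1 : enc 0 (vtx b') \in D1 by rewrite E1 mem_nset kind_enc // vtx_enc adj eqxx orbT.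
    have : enc 0 (vtx b') = b'.
      apply: (T_uniq tT'); [exact: (subsetP sT1) | exact: (subsetP sT2) | exact: vtx_enc].
    by move=> e; rewrite e (disjointFl dj' bD) in p1.
  + by move: (card_nset H (vtx a')); rewrite -E1 d1 s1 => ->.
  + by move: (card_nset H (vtx b')); rewrite -E2 d2 s2 => ->.
  + move=> w; apply/negP => /andP [aw bw].
    have p1 : enc 0 w \in D1 by rewrite E1 mem_nset kind_enc // vtx_enc aw eqxx orbT.
    have p2 : enc 0 w \in D2 by rewrite E2 mem_nset kind_enc // vtx_enc bw eqxx orbT.
    by rewrite (disjointFl dj' p2) in p1.
Qed.
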